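(* Let $A\in\mathbb{R}^{n\times m}$ with $n<m$ have nonzero columns $\alpha_1,\dots,\alpha_m$, let $c_{ij}=\langle\alpha_i,\alpha_j\rangle$ and $\nu(i)=\max_{j\neq i}\frac{|c_{ij}|}{c_{ii}}$. Then every $x\in\mathbb{R}^m$ with $$\|x\|_0\le\frac{1}{2\max_i\nu(i)}\Big(\min_{i\neq j}\frac{c_{ii}}{c_{jj}}-\frac12\Big)$$ is the unique minimizer of $\min_{z\in\mathbb{R}^m}\|z\|_1$ subject to $Az=Ax$; that is, the sparsity level satisfies $SL\ge\frac{1}{2\max_i\nu(i)}\big(\min_{i\neq j}\frac{c_{ii}}{c_{jj}}-\frac12\big)$.
   Context: $[m]=\{1,\dots,m\}$; $\|x\|_0$ is the number of nonzero entries of $x$; the maximum over $i$ and minimum over $i\neq j$ range over $[m]$. The sparsity level $SL$ of $A$ is the largest integer $s$ such that every $x$ with $\|x\|_0\le s$ is uniquely recovered as the minimizer of $\min\|z\|_1$ s.t. $Az=Ax$. *)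

(* Defs.v *)
From HB Require Import structures.
From mathcomp Require Import all_boot all_order all_algebra.
From mathcomp Require Export reals.
Set Implicit Arguments. Unset Strict Implicit. Unset Printing Implicit Defensive.
Import Order.TTheory GRing.Theory Num.Theory.
Local Open Scope ring_scope.

Definition gram (R : realType) (n m : nat) (A : 'M[R]_(n, m)) (i j : 'I_m) : R :=
  \sum_(k < n) A k i * A k j.

(* nu(i) = max_{j <> i} |c_ij| / c_ii  (values are >= 0, so 0 is a harmless
   default for the max). *)
Definition nu (R : realType) (n m : nat) (A : 'M[R]_(n, m)) (i : 'I_m) : R :=
  \big[Num.max/0]_(j < m | j != i) (`|gram A i j| / gram A i i).

Definition max_nu (R : realType) (n m : nat) (A : 'M[R]_(n, m)) : R :=
  \big[Num.max/0]_(i < m) nu A i.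

(* min_{i <> j} c_ii / c_jj ; the default 1 is harmless: the minimum over a
   nonempty range is always <= 1 since both c_ii/c_jj and c_jj/c_ii occur. *)
Definition min_ratio (R : realType) (n m : nat) (A : 'M[R]_(n, m)) : R :=
  \big[Num.min/1]_(i < m) \big[Num.min/1]_(j < m | j != i)
     (gram A i i / gram A j j).

Definition norm0 (R : realType) (m : nat) (x : 'cV[R]_m) : nat :=
  #|[set i : 'I_m | x i 0 != 0]|.

Definition norm1 (R : realType) (m : nat) (x : 'cV[R]_m) : R :=
  \sum_(i < m) `|x i 0|.

Definition unique_l1_minimizer (R : realType) (n m : nat) (A : 'M[R]_(n, m))
  (x : 'cV[R]_m) : Prop :=
  forall z : 'cV[R]_m, A *m z = A *m x -> z <> x -> norm1 x < norm1 z.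

(* Main.v *)
Require Import Defs.
From HB Require Import structures.
From mathcomp Require Import all_boot all_order all_algebra.
From mathcomp Require Import reals.
From mathcomp Require Import ring lra.
Import Order.TTheory GRing.Theory Num.Theory.
Local Open Scope ring_scope.

Section Aux.
Variables (R : realType) (n m : nat) (A : 'M[R]_(n, m)).

Lemma gram_h (h : 'cV[R]_m) : A *m h = 0 ->
  forall i, \sum_j gram A i j * h j 0 = 0.
Proof.
move=> Hh i; rewrite /gram.
under eq_bigr => j _ do rewrite mulr_suml.
rewrite exchange_big /=; apply: big1 => k _.
have := congr1 (fun M : 'cV[R]_n => M k 0) Hh; rewrite !mxE => E.
transitivity (A k i * \sum_j A k j * h j 0); last by rewrite E mulr0.
rewrite mulr_sumr.
by apply: eq_bigr => j _; rewrite mulrA.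
Qed.

Lemma diag_pos i : col i A != 0 -> 0 < gram A i i.
Proof.
move=> Hc; rewrite lt_def; apply/andP; split; last first.
  by rewrite /gram sumr_ge0 // => k _; rewrite -expr2 sqr_ge0.
apply/negP => /eqP /psumr_eq0P H.
move/eqP: Hc; apply; apply/matrixP => k l; rewrite !mxE.
have : A k i * A k i = 0 by apply: H => // j _; rewrite -expr2 sqr_ge0.
by move/eqP; rewrite mulf_eq0 orbb => /eqP.
Qed.

Lemma nu_ge i j : j != i -> `|gram A i j| / gram A i i <= nu A i.
Proof. by move=> H; rewrite /nu; apply: le_bigmax_cond. Qed.

Lemma nu_ge0 i : 0 <= nu A i.
Proof. exact: bigmax_ge_id. Qed.

Lemma nu_le i : nu A i <= max_nu A.
Proof. exact: le_bigmax. Qed.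

Lemma max_nu_ge0 : (0 < m)%N -> 0 <= max_nu A.
Proof.
move=> Hm; apply: le_trans (nu_ge0 (Ordinal Hm)) (nu_le _).
Qed.

Lemma min_ratio_le1 : min_ratio A <= 1.
Proof. exact: bigmin_le_id. Qed.

Lemma bound_h (h : 'cV[R]_m) (Hcol : forall i : 'I_m, col i A != 0) :
  A *m h = 0 -> forall i, `|h i 0| <= max_nu A * norm1 h.
Proof.
move=> Hh i.
have cpos : 0 < gram A i i by apply: diag_pos.
set c := gram A i i in cpos.
have E := gram_h h Hh i.
rewrite (bigD1 i) //= -/c in E.
have E2 : c * h i 0 = - \sum_(j < m | j != i) gram A i j * h j 0.
  by apply/eqP; rewrite -subr_eq0 opprK E.
have L : c * `|h i 0| <= (max_nu A * c) * norm1 h.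
  rewrite -{1}(ger0_norm (ltW cpos)) -normrM E2 normrN.
  apply: le_trans (ler_norm_sum _ _ _) _.
  apply: (@le_trans _ _ (\sum_(j < m | j != i) (max_nu A * c) * `|h j 0|)).
    apply: ler_sum => j Hj; rewrite normrM ler_wpM2r //.
    have := nu_ge i j Hj; rewrite ler_pdivrMr // => H1.
    apply: le_trans H1 _; apply: ler_wpM2r; [exact: ltW | exact: nu_le].
  rewrite -mulr_sumr; apply: ler_wpM2l.
    apply: mulr_ge0 (ltW cpos).
    apply: max_nu_ge0; exact: (leq_ltn_trans (leq0n _) (ltn_ord i)).
  by rewrite /norm1 [X in _ <= X](bigD1 i) //= lerDr.
rewrite -mulrA mulrCA in L.
by rewrite -(ler_pM2l cpos).
Qed.

End Aux.

Theorem mainTheorem7 (R : realType) (n m : nat) (A : 'M[R]_(n, m))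
  (Hnm : (n < m)%N) (Hcol : forall i : 'I_m, col i A != 0)
  (x : 'cV[R]_m)
  (Hx : (norm0 x)%:R <= (2 * max_nu A)^-1 * (min_ratio A - 2^-1)) :
  unique_l1_minimizer A x.
Proof.
move=> z Hz Hzx.
set h := z - x.
have Hh : A *m h = 0 by rewrite /h mulmxBr Hz subrr.
have zE : z = x + h by rewrite /h addrC subrK.
have hnz : h != 0 by rewrite /h subr_eq0; apply/eqP.
clearbody h.
have Mge0 : 0 <= max_nu A by apply: max_nu_ge0; exact: leq_ltn_trans (leq0n _) Hnm.
set M := max_nu A in Mge0 Hx.
set s : R := (norm0 x)%:R in Hx.
have s0 : 0 <= s by rewrite /s ler0n.
have sM : s * M <= 4^-1.
  have [M0|Mpos] := eqVneq M 0.
    rewrite M0 mulr0; lra.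
  have := ler_wpM2r Mge0 Hx.
  have -> : (2 * M)^-1 * (min_ratio A - 2^-1) * M = (min_ratio A - 2^-1) / 2.
    by rewrite mulrAC invfM mulfVK // mulrC.
  have := @min_ratio_le1 R n m A; lra.
set N := norm1 h.
have Npos : 0 < N.
  move: hnz.
  have [j Hj | Hall] := pickP (fun j => h j 0 != 0).
    move=> _; rewrite /N /norm1 (bigD1 j) //=.
    apply: (@lt_le_trans _ _ `|h j 0|); first by rewrite normr_gt0.
    by rewrite lerDl sumr_ge0.
  move/eqP => hn; exfalso; apply: hn; apply/matrixP => k l; rewrite !mxE (ord1 l).
  by have := Hall k; rewrite /= => /negbFE /eqP.
set T := \sum_i (if x i 0 != 0 then `|h i 0| else 0).
have HT : T <= s * (M * N).
  apply: (@le_trans _ _ (\sum_i (if x i 0 != 0 then M * N else 0))).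
    apply: ler_sum => i _; case: ifP => // _; exact: bound_h.
  rewrite -big_mkcond /=.
  rewrite (eq_bigl (fun i => i \in [set i | x i 0 != 0])); last by move=> i; rewrite inE.
  by rewrite sumr_const /s /norm0 mulr_natl.
have HZ : norm1 x + N - 2 * T <= norm1 z.
  rewrite /norm1 /N /norm1 /T zE mulr_sumr -big_split /= -sumrB.
  apply: ler_sum => i _; rewrite mxE.
  case: ifP => [_|/negbFE/eqP ->]; last by rewrite normr0 !add0r mulr0 subr0.
  have := ler_normB (x i 0 + h i 0) (h i 0); rewrite addrK; lra.
have : s * M * N <= 4^-1 * N by rewrite ler_wpM2r // ltW.
rewrite -mulrA in HT |- *; lra.
Qed.
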